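(* Let $D,K,N\in\mathbb{N}$ and let $\{d_n\}_{n\in\mathbb{N}}$ be a sequence of natural numbers. Writing $D_n=\prod_{i=1}^{n}d_i$, we have $$D^{N+1}\prod_{i=1}^{N}(KD_i+d_i)\geq KDD_N\sum_{n=1}^{N}D^n\prod_{i=1}^{n-1}(KD_i+d_i).$$
   Context: $\mathbb{N}=\{1,2,3,\ldots\}$; empty products equal $1$. *)

(* Defs.v *)
From mathcomp Require Import all_boot.
Set Implicit Arguments. Unset Strict Implicit. Unset Printing Implicit Defensive.

Definition Dprod (d : nat -> nat) (n : nat) : nat := \prod_(1 <= i < n.+1) d i.

(* Main.v *)
Require Import Defs.
From mathcomp Require Import all_boot.
From mathcomp Require Import zify.

Lemma aux (D K : nat) (d : nat -> nat) (hD : 0 < D)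
  (hd : forall i, 0 < i -> 0 < d i) (N : nat) :
  K * Dprod d N *
     \sum_(1 <= n < N.+1) D ^ n * \prod_(1 <= i < n) (K * Dprod d i + d i)
  <= D ^ N * \prod_(1 <= i < N.+1) (K * Dprod d i + d i).
Proof.
elim: N => [|N IH].
  by rewrite big_geq // muln0.
rewrite [X in _ * X <= _]big_nat_recr // [X in _ <= _ * X]big_nat_recr //=.
have hDp : Dprod d N.+1 = Dprod d N * d N.+1 by rewrite /Dprod big_nat_recr.
rewrite hDp.
move: IH.
set s := \sum_(1 <= n < N.+1) _.
set p := \prod_(1 <= i < N.+1) _.
set a := Dprod d N.
have hb := hd N.+1 (ltn0Sn N).
set b := d N.+1.
rewrite expnS.
set X := D ^ N.
move=> IH.
have h1 : K * a * s * (b * D) <= X * p * (b * D) by rewrite leq_mul2r IH orbT.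
have h2 : s <= s * D by rewrite -{1}(muln1 s) leq_mul2l hD orbT.
nia.
Qed.

Theorem lemma2p5 (D K N : nat) (d : nat -> nat)
  (hD : 0 < D) (hK : 0 < K) (hN : 0 < N)
  (hd : forall i, 0 < i -> 0 < d i) :
  D ^ N.+1 * \prod_(1 <= i < N.+1) (K * Dprod d i + d i)
  >= K * D * Dprod d N *
     \sum_(1 <= n < N.+1) D ^ n * \prod_(1 <= i < n) (K * Dprod d i + d i).
Proof.
have := @aux D K d hD hd N.
rewrite expnS.
set s := \sum_(1 <= n < N.+1) _.
set p := \prod_(1 <= i < N.+1) _.
move=> h.
have := leq_mul (leqnn D) h.
by rewrite -!mulnA [D * (K * _)]mulnCA [D * (Dprod d N * _)]mulnCA.
Qed.
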